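(* Let $L\ge1$ and $\alpha\in(\alpha_{L+1},\alpha_L)$, and let $c_1,\dots,c_L>0$ and $d_0(L)>0$ be the constants from the affine medium-size system. If $(l_0,\dots,l_{L+2})\in\mathbb{R}^{L+3}$ satisfies $l_0=0$, $l_{L+2}\ge0$, $\sum_{j=1}^{L+1}l_j=1$, and $d_j:=-\alpha l_{j-1}+l_j-l_{j+1}+\alpha l_{j+2}$ for $j\in\{1,\dots,L\}$, then $$d_0\ge d_0(L)-\sum_{k=1}^Lc_{L+1-k}d_k,\qquad\text{where } d_0:=-l_1+\alpha l_2.$$
   Context: Define $\alpha_1:=+\infty$ and, for $L\ge2$, $\alpha_L:=\dfrac{1}{1+2\cos(\frac{2\pi}{L+2})}$. For real $d_1,\dots,d_L$, the system $AS(d_1,\dots,d_L)$ on $(l_0,\dots,l_{L+2})$ is: $l_0=l_{L+2}=0$; $d_j=-\alpha l_{j-1}+l_j-l_{j+1}+\alpha l_{j+2}$ for $j\in\{1,\dots,L\}$; $\sum_{j=1}^{L+1}l_j=1$. It is a fact (proved in the paper) that there are constants $c_1,\dots,c_L>0$ depending only on $\alpha,L$ such that for all $d_1,\dots,d_L$ this system has a unique solution with $-l_1+\alpha l_2=d_0(L)-\sum_{k=1}^Lc_{L+1-k}d_k$ and $-\alpha l_L+l_{L+1}=-d_0(L)-\sum_{k=1}^Lc_kd_k$; here $d_0(L)>0$ is the value of $-l_1+\alpha l_2$ at the solution of $AS(0,\dots,0)$. *)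

(* Defs.v *)
From Stdlib Require Import Reals Lra Lia.
Open Scope R_scope.

Fixpoint sum1 (n : nat) (f : nat -> R) : R :=
  match n with
  | O => 0
  | S k => sum1 k f + f (S k)
  end.

(* alpha_L for L >= 2 ; alpha_1 = +infinity is handled in [alpha_interval]. *)
Definition alphaL (L : nat) : R := 1 / (1 + 2 * cos (2 * PI / INR (L + 2))).

Definition alpha_interval (L : nat) (a : R) : Prop :=
  alphaL (L + 1) < a /\ ((1 < L)%nat -> a < alphaL L).

Definition dj (a : R) (l : nat -> R) (j : nat) : R :=
  - a * l (j - 1)%nat + l j - l (j + 1)%nat + a * l (j + 2)%nat.

Definition AS_sol (a : R) (L : nat) (d : nat -> R) (l : nat -> R) : Prop :=
  l 0%nat = 0 /\ l (L + 2)%nat = 0 /\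
  (forall j, (1 <= j <= L)%nat -> d j = dj a l j) /\
  sum1 (L + 1) l = 1.

(* c_1..c_L and d_0(L) are "the constants of the affine medium-size system":
   for every d, AS(d) has a unique solution (on indices 0..L+2), and at it
   -l_1 + a l_2 = d0L - sum_k c_{L+1-k} d_k and
   -a l_L + l_{L+1} = -d0L - sum_k c_k d_k. *)
Definition AS_constants (a : R) (L : nat) (c : nat -> R) (d0L : R) : Prop :=
  forall d : nat -> R,
    (exists l, AS_sol a L d l) /\
    (forall l l', AS_sol a L d l -> AS_sol a L d l' ->
       forall i, (i <= L + 2)%nat -> l i = l' i) /\
    (forall l, AS_sol a L d l ->
       - l 1%nat + a * l 2%nat = d0L - sum1 L (fun k => c (L + 1 - k)%nat * d k) /\
       - a * l L + l (L + 1)%nat = - d0L - sum1 L (fun k => c k * d k)).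

(* Main.v *)
Require Import Defs.
From Stdlib Require Import Reals Lra Lia.
Open Scope R_scope.

Lemma sum1_ext_le (n N : nat) (f g : nat -> R) :
  (n <= N)%nat -> (forall k, (1 <= k <= N)%nat -> f k = g k) -> sum1 n f = sum1 n g.
Proof.
  induction n as [|n IH]; intros Hn H; simpl; [reflexivity|].
  rewrite IH; [| lia | exact H]. rewrite (H (S n)) by lia. reflexivity.
Qed.

Lemma alphaL_pos (L : nat) : (1 <= L)%nat -> 0 < alphaL (L + 1).
Proof.
  intros HL. unfold alphaL.
  assert (H3 : 4 <= INR (L + 1 + 2)).
  { replace 4 with (INR 4) by (simpl; lra). apply le_INR. lia. }
  assert (Hc : 0 <= cos (2 * PI / INR (L + 1 + 2))).
  { apply cos_ge_0.
    - assert (0 < 2 * PI / INR (L + 1 + 2)).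
      { apply Rdiv_lt_0_compat; [pose proof PI_RGT_0; lra | lra]. }
      pose proof PI_RGT_0; lra.
    - apply (Rmult_le_reg_r (INR (L + 1 + 2))); [lra|].
      unfold Rdiv. rewrite Rmult_assoc, Rinv_l by lra.
      pose proof PI_RGT_0. nra. }
  apply Rdiv_lt_0_compat; lra.
Qed.

Lemma sum1_S (n : nat) (f : nat -> R) : sum1 (S n) f = sum1 n f + f (S n).
Proof. reflexivity. Qed.

Theorem mainTheorem10 (L : nat) (a : R) (c : nat -> R) (d0L : R) :
  (1 <= L)%nat ->
  alpha_interval L a ->
  (forall k, (1 <= k <= L)%nat -> 0 < c k) ->
  0 < d0L ->
  AS_constants a L c d0L ->
  forall l : nat -> R,
    l 0%nat = 0 ->
    0 <= l (L + 2)%nat ->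
    sum1 (L + 1) l = 1 ->
    - l 1%nat + a * l 2%nat >= d0L - sum1 L (fun k => c (L + 1 - k)%nat * dj a l k).
Proof.
  intros HL [Ha _] Hc Hd0 HAS l Hl0 Ht Hs.
  pose proof (alphaL_pos L HL) as Hap.
  set (t := l (L + 2)%nat) in *.
  set (l' := fun i => if Nat.eqb i (L + 2) then 0 else l i).
  assert (E : forall i, i <> (L + 2)%nat -> l' i = l i).
  { intros i Hi. unfold l'. destruct (Nat.eqb_spec i (L + 2)); [lia|reflexivity]. }
  assert (Hsol : AS_sol a L (fun j => dj a l' j) l').
  { repeat split.
    - rewrite E by lia. exact Hl0.
    - unfold l'. rewrite Nat.eqb_refl. reflexivity.
    - rewrite <- Hs. apply (sum1_ext_le _ (L + 1)); [lia|]. intros k Hk. apply E; lia. }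
  destruct (HAS (fun j => dj a l' j)) as [_ [_ H3]].
  destruct (H3 l' Hsol) as [H _].
  rewrite (E 1%nat), (E 2%nat) in H by lia.
  rewrite H.
  destruct L as [|m]; [lia|].
  rewrite !(sum1_S m).
  assert (Hsum : sum1 m (fun k => c (S m + 1 - k)%nat * dj a l' k)
               = sum1 m (fun k => c (S m + 1 - k)%nat * dj a l k)).
  { apply (sum1_ext_le _ m); [lia|]. intros k Hk. unfold dj.
    rewrite !E by lia. reflexivity. }
  rewrite Hsum.
  assert (Hlast : dj a l' (S m) = dj a l (S m) - a * t).
  { unfold dj. rewrite !E by lia.
    replace (S m + 2)%nat with (S m + 2)%nat by reflexivity.
    unfold l'. rewrite Nat.eqb_refl. unfold t. ring. }
  rewrite Hlast.
  replace (S m + 1 - S m)%nat with 1%nat by lia.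
  assert (0 < c 1%nat) by (apply Hc; lia).
  assert (0 <= c 1%nat * a * t) by (apply Rmult_le_pos; [apply Rmult_le_pos|]; lra).
  lra.
Qed.
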